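(* Let $S$ be a regular ordered semigroup and $\mathcal{B}(S)$ its semigroup of bi-ideals. Let $\mathscr{R}_{\mathcal{B}(S)}$ be the Green's $\mathscr{R}$-relation of the semigroup $(\mathcal{B}(S),* )$ and let $\mathscr{R}'$ be the relation on $\mathcal{B}(S)$ given by: $A\,\mathscr{R}'\,B$ iff for each $a\in A$ there is $b\in B$ with $a\,\mathscr{R}_S\,b$ and for each $b\in B$ there is $a\in A$ with $a\,\mathscr{R}_S\,b$. Then $\mathscr{R}_{\mathcal{B}(S)}\subseteq\mathscr{R}'$.
   Context: An ordered semigroup $(S,\cdot,\leq)$ is a semigroup with a compatible partial order. For $A\subseteq S$, $(A]=\{x\in S: x\leq a\text{ for some }a\in A\}$. $S$ is regular if for each $a\in S$ there is $x\in S$ with $a\leq axa$. A nonempty $A\subseteq S$ is a bi-ideal if $ASA\subseteq A$ and $(A]=A$; $\mathcal{B}(S)$ is the set of bi-ideals with operation $A*B=(AB]$. $a\,\mathscr{R}_S\,b$ iff $(a\cup aS]=(b\cup bS]$. $\mathscr{R}_{\mathcal{B}(S)}$ is the usual Green's $\mathscr{R}$-relation of the semigroup $(\mathcal{B}(S),* )$. *)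

(* Defs.v *)
Set Implicit Arguments.

Record ordered_semigroup (S : Type) (mul : S -> S -> S) (le : S -> S -> Prop) : Prop := {
  os_assoc : forall a b c, mul (mul a b) c = mul a (mul b c);
  os_refl : forall a, le a a;
  os_antisym : forall a b, le a b -> le b a -> a = b;
  os_trans : forall a b c, le a b -> le b c -> le a c;
  os_compat_r : forall a b c, le a b -> le (mul a c) (mul b c);
  os_compat_l : forall a b c, le a b -> le (mul c a) (mul c b)
}.

Section Defs.
Variables (S : Type) (mul : S -> S -> S) (le : S -> S -> Prop).

Definition os_regular : Prop := forall a, exists x, le a (mul (mul a x) a).

Definition downset (A : S -> Prop) : S -> Prop := fun x => exists a, A a /\ le x a.

Definition bi_ideal (A : S -> Prop) : Prop :=
  (exists a, A a) /\
  (forall a s b, A a -> A b -> A (mul (mul a s) b)) /\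
  (forall x, A x <-> downset A x).

Definition bmul (A B : S -> Prop) : S -> Prop :=
  downset (fun x => exists a b, A a /\ B b /\ x = mul a b).

Definition R_S (a b : S) : Prop :=
  forall x, (le x a \/ exists s, le x (mul a s)) <-> (le x b \/ exists s, le x (mul b s)).

(* principal right ideal A B(S)^1 = {A} ∪ { A * X | X ∈ B(S) } in (B(S), * ) *)
Definition right_ideal_gen (A : S -> Prop) : (S -> Prop) -> Prop :=
  fun C => C = A \/ exists X, bi_ideal X /\ C = bmul A X.

Definition R_B (A B : S -> Prop) : Prop :=
  forall C, right_ideal_gen A C <-> right_ideal_gen B C.

Definition R' (A B : S -> Prop) : Prop :=
  (forall a, A a -> exists b, B b /\ R_S a b) /\
  (forall b, B b -> exists a, A a /\ R_S a b).
End Defs.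

(* Main.v *)
Require Import Defs.

Lemma RS_sym (S : Type) (mul : S -> S -> S) (le : S -> S -> Prop) a b :
  R_S mul le a b -> R_S mul le b a.
Proof. intros H x; split; apply H. Qed.

Lemma RS_refl (S : Type) (mul : S -> S -> S) (le : S -> S -> Prop) a :
  R_S mul le a a.
Proof. intros x; tauto. Qed.

Lemma key (S : Type) (mul : S -> S -> S) (le : S -> S -> Prop)
  (HS : ordered_semigroup mul le) (Hreg : os_regular mul le)
  (A B X Y : S -> Prop) (HA : bi_ideal mul le A)
  (H1 : forall a, A a -> bmul mul le B X a)
  (H2 : forall b, B b -> bmul mul le A Y b)
  (H3 : forall b, bmul mul le A Y b -> B b) :
  forall a, A a -> exists b, B b /\ R_S mul le a b.
Proof.
  destruct HS as [as_ rf an tr cr cl].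
  destruct HA as [_ [HAm _]].
  intros a Ha.
  destruct (Hreg a) as [x Hx].
  destruct (H1 a Ha) as [p [[b0 [x0 [Hb0 [Hx0 ->]]]] Hap]].
  destruct (H2 b0 Hb0) as [q [[a1 [y1 [Ha1 [Hy1 ->]]]] Hbq]].
  exists (mul (mul a x) b0). split.
  - apply H3. exists (mul (mul (mul a x) a1) y1). split.
    + exists (mul (mul a x) a1), y1. split; [apply HAm; auto|]. split; auto.
    + rewrite (as_ (mul a x) a1 y1). apply cl. exact Hbq.
  - assert (Hab : le a (mul (mul (mul a x) b0) x0)).
    { rewrite (as_ (mul a x) b0 x0). eapply tr; [exact Hx|]. apply cl. exact Hap. }
    intros z; split.
    + intros [Hz | [s Hz]]; right.
      * exists x0. eapply tr; eauto.
      * exists (mul x0 s). rewrite <- as_. eapply tr; [exact Hz|]. apply cr. exact Hab.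
    + intros [Hz | [s Hz]]; right.
      * exists (mul x b0). rewrite <- as_. exact Hz.
      * exists (mul (mul x b0) s). rewrite <- !as_. exact Hz.
Qed.

Theorem mainTheorem5 (S : Type) (mul : S -> S -> S) (le : S -> S -> Prop)
  (HS : ordered_semigroup mul le) (Hreg : os_regular mul le)
  (A B : S -> Prop) (HA : bi_ideal mul le A) (HB : bi_ideal mul le B) :
  R_B mul le A B -> R' mul le A B.
Proof.
  intros H.
  assert (EA : right_ideal_gen mul le B A) by (apply H; left; reflexivity).
  assert (EB : right_ideal_gen mul le A B) by (apply H; left; reflexivity).
  destruct EA as [EA | [X [_ EA]]].
  { subst A. split; intros a Ha; exists a; split; auto; apply RS_refl. }
  destruct EB as [EB | [Y [_ EB]]].
  { subst B. split; intros a Ha; exists a; split; auto; apply RS_refl. }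
  split.
  - apply (@key S mul le HS Hreg A B X Y HA).
    + intros a Ha; rewrite <- EA; exact Ha.
    + intros b Hb; rewrite <- EB; exact Hb.
    + intros b Hb; rewrite EB; exact Hb.
  - intros b Hb.
    destruct (@key S mul le HS Hreg B A Y X HB) with (a := b) as [a [Ha Hr]]; auto.
    + intros c Hc; rewrite <- EB; exact Hc.
    + intros c Hc; rewrite <- EA; exact Hc.
    + intros c Hc; rewrite EA; exact Hc.
    + exists a; split; auto; apply RS_sym; auto.
Qed.
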